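(* Let $\Lambda$ be a finite interval and $R\in\mathcal R_\Lambda$ a root tiling with $K\in\mathbb N$ voids located at $v_1<\dots<v_K$. Then there are $L_1,\dots,L_{K-1}\in\mathbb N_0$ and vectors $\psi^l,\psi^r$ such that $$\psi_\Lambda(R)=\psi^l\otimes|0\rangle_{v_1}\otimes\varphi_{L_1}\otimes\cdots\otimes\varphi_{L_{K-1}}\otimes|0\rangle_{v_K}\otimes\psi^r$$ (factors on consecutive sites from left to right), where for some $L_0,L_K\in\mathbb N_0$: $\psi^l=\lambda|11000\rangle\otimes\varphi_{L_0}$ if $R$ starts with a left boundary dimer and $\psi^l=\varphi_{L_0}$ otherwise; $\psi^r=\lambda\varphi_{L_K}\otimes|011\rangle$ if $R$ ends with a right dimer, $\psi^r=\varphi^{(j)}_{L_K}$ if $R$ ends with a right $j$-monomer ($j\in\{1,2\}$), and $\psi^r=\varphi_{L_K}$ otherwise. Here $\varphi_0=1$ (the factor is absent).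
   Context: $\mathcal H_\Lambda=\bigotimes_{x\in\Lambda}\mathbb C^2$ with basis $|1\rangle,|0\rangle$ per site, product basis $|\boldsymbol\sigma\rangle$; $\lambda\in\mathbb C$. Tiles occupy consecutive sites and carry 0/1 words: void $0$; monomer $100$; dimer $011000$; left boundary dimer $11000$ (only as first tile); and, only as last tile: right dimer $011$, right 1-monomer $1$, right 2-monomer $10$, truncated 1-dimer $0110$, truncated 2-dimer $01100$. A root tiling $R$ of $\Lambda$ is a tiling by consecutive voids and monomers, optionally with a left boundary dimer as first tile and optionally with one of right dimer, right 1-monomer, right 2-monomer as last tile; $\mathcal R_\Lambda$ is their set. A VMD tiling derived from $R$ is obtained by choosing disjoint pairs of consecutive tiles of $R$, each either two monomers (replaced by a dimer) or a monomer followed by a right $j$-monomer, $j\in\{1,2\}$ (replaced by the truncated $j$-dimer); $\mathcal D_\Lambda(R)$ is their set, $\boldsymbol\sigma_\Lambda(\mathbf D)$ the concatenated particle content, $\#(\mathbf D)$ the number of tiles that are dimers, boundary dimers or truncated dimers, and $\psi_\Lambda(R)=\sum_{\mathbf D\in\mathcal D_\Lambda(R)}\lambda^{\#(\mathbf D)}|\boldsymbol\sigma_\Lambda(\mathbf D)\rangle$. For $L\in\mathbb N$, $\varphi_L=\psi_{[1,3L]}(R_M)$ where $R_M$ is the root tiling consisting of $L$ monomers; for $j\in\{1,2\}$, $\varphi^{(j)}_L=\psi_{[1,3(L-1)+j]}(R)$ with $R$ consisting of $L-1$ monomers followed by a right $j$-monomer. *)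

(* Defs.v *)
From mathcomp Require Import all_boot all_order all_algebra.
Set Implicit Arguments. Unset Strict Implicit. Unset Printing Implicit Defensive.
Import GRing.Theory.
Local Open Scope ring_scope.

(* ---------- Vectors in  H = (C^2)^{⊗ n}  ---------------------------------
   A vector on n consecutive sites is a pair (n, c) where c : seq bool -> F
   gives the coefficient of the product basis vector |w>, w a 0/1 word
   (true = 1, false = 0); c vanishes on words of length <> n. *)
Definition qvec (F : Type) := (nat * (seq bool -> F))%type.

Section Vec.
Variable F : comRingType.

Definition ket (s : seq bool) : qvec F := (size s, fun w => (w == s)%:R).

Definition tens (u v : qvec F) : qvec F :=
  (u.1 + v.1, fun w => if size w == (u.1 + v.1)%N
                       then u.2 (take u.1 w) * v.2 (drop u.1 w) else 0).

Definition scale (c : F) (u : qvec F) : qvec F := (u.1, fun w => c * u.2 w).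
End Vec.

Inductive tile :=
  | Void
  | Mono
  | Dimer
  | LDimer
  | RDimer
  | RMono1
  | RMono2
  | TDimer1
  | TDimer2.

Definition tword (t : tile) : seq bool :=
  match t with
  | Void => [:: false]
  | Mono => [:: true; false; false]
  | Dimer => [:: false; true; true; false; false; false]
  | LDimer => [:: true; true; false; false; false]
  | RDimer => [:: false; true; true]
  | RMono1 => [:: true]
  | RMono2 => [:: true; false]
  | TDimer1 => [:: false; true; true; false]
  | TDimer2 => [:: false; true; true; false; false]
  end.

Definition tiles_word (D : seq tile) : seq bool := flatten (map tword D).

Definition is_void t := if t is Void then true else false.
Definition is_mono t := if t is Mono then true else false.
Definition is_ldimer t := if t is LDimer then true else false.

Definition is_dimerlike t :=
  match t with Dimer | LDimer | RDimer | TDimer1 | TDimer2 => true | _ => false end.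

Definition ndim (D : seq tile) : nat := count is_dimerlike D.

Definition root_tiling (n : nat) (R : seq tile) : Prop :=
  size (tiles_word R) = n /\
  exists l m r : seq tile,
    R = l ++ m ++ r /\
    (l = [::] \/ l = [:: LDimer]) /\
    all (fun t => is_void t || is_mono t) m /\
    (r = [::] \/ r = [:: RDimer] \/ r = [:: RMono1] \/ r = [:: RMono2]).

(* All VMD tilings derived from R: each element corresponds to exactly one
   choice of disjoint pairs of consecutive tiles (Mono,Mono) -> Dimer,
   (Mono, RMono j) -> TDimer j. *)
Fixpoint derive (R : seq tile) : seq (seq tile) :=
  match R with
  | [::] => [:: [::]]
  | Mono :: ((Mono :: R') as R2) =>
      map (cons Mono) (derive R2) ++ map (cons Dimer) (derive R')
  | Mono :: ((RMono1 :: R') as R2) =>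
      map (cons Mono) (derive R2) ++ map (cons TDimer1) (derive R')
  | Mono :: ((RMono2 :: R') as R2) =>
      map (cons Mono) (derive R2) ++ map (cons TDimer2) (derive R')
  | t :: R' => map (cons t) (derive R')
  end.

(* 0-based offsets (within the interval) of the sites occupied by voids *)
Fixpoint void_offs (pos : nat) (R : seq tile) : seq nat :=
  match R with
  | [::] => [::]
  | t :: R' => (if is_void t then [:: pos] else [::]) ++
               void_offs (pos + size (tword t)) R'
  end.
Definition void_offsets (R : seq tile) := void_offs 0 R.

Section Psi.
Variables (F : comRingType) (lam : F).

Definition psi (R : seq tile) : qvec F :=
  (size (tiles_word R),
   fun w => \sum_(D <- derive R) lam ^+ ndim D * (w == tiles_word D)%:R).

(* varphi_L : L monomers (varphi_0 = 1 = |empty word>) *)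
Definition varphi (L : nat) : qvec F := psi (nseq L Mono).

(* varphi^{(j)}_L : L-1 monomers followed by a right j-monomer (L >= 1) *)
Definition varphiR (j L : nat) : qvec F :=
  psi (rcons (nseq L.-1 Mono) (if j == 1%N then RMono1 else RMono2)).

(* |0> ⊗ varphi_{L1} ⊗ |0> ⊗ ... ⊗ varphi_{L_{K-1}} ⊗ |0>  after the first |0>:
   chain [L1;...;Lm] = varphi_{L1} ⊗ |0> ⊗ ... ⊗ varphi_{Lm} ⊗ |0>  *)
Definition chain (Ls : seq nat) : qvec F :=
  foldr (fun L acc => tens (varphi L) (tens (ket F [:: false]) acc)) (ket F [::]) Ls.
End Psi.

(* Main.v *)
Require Import Defs.
From mathcomp Require Import all_boot all_order all_algebra.
From Stdlib Require Import FunctionalExtensionality Lia.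
From mathcomp Require Import zify.
Local Open Scope ring_scope.
Import GRing.Theory.
Set Implicit Arguments. Unset Strict Implicit.

Lemma size_ind (P : seq tile -> Prop) :
  P [::] -> (forall t s, (forall s', (size s' <= size s)%N -> P s') -> P (t :: s)) ->
  forall s, P s.
Proof.
move=> P0 PS s; have [n] := ubnP (size s); elim: n s => [|n IHn] [|t s] //= H.
apply: PS => s' Hs'; apply: IHn; apply: leq_ltn_trans Hs' _; exact: H.
Qed.

Definition sept t := match t with Mono | RMono1 | RMono2 => false | _ => true end.

Lemma allpairs_cons (t : tile) (X Y : seq (seq tile)) :
  [seq a ++ c | a <- map (cons t) X, c <- Y] = map (cons t) [seq a ++ c | a <- X, c <- Y].
Proof. elim: X => //= x X ->; by rewrite map_cat -map_comp. Qed.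

Definition pairt t := match t with
  | Mono => Some Dimer | RMono1 => Some TDimer1 | RMono2 => Some TDimer2 | _ => None end.

Lemma derive_MM t' X : derive (Mono :: t' :: X) =
  map (cons Mono) (derive (t' :: X)) ++
  (if pairt t' is Some d then map (cons d) (derive X) else [::]).
Proof. by case: t' => //=; rewrite cats0. Qed.

Lemma derive_nM t X : t <> Mono -> derive (t :: X) = map (cons t) (derive X).
Proof. by case: t. Qed.

Lemma derive_cat A C : (if C is t :: _ then sept t else false) ->
  derive (A ++ C) = [seq a ++ c | a <- derive A, c <- derive C].
Proof.
move=> HC; elim/size_ind: A.
  by rewrite /= cats0 map_id.
move=> t s IH.
have IH1 : derive (s ++ C) = _ := IH s (leqnn _).
case: t; try by rewrite cat_cons derive_nM // IH1 derive_nM // allpairs_cons.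
case: s IH IH1 => [|t' s'] IH IH1.
  case: C HC {IH IH1} => [|t' C'] //; case: t' => //= _; by rewrite cats0.
have IH2 := IH s' (leqnSn _).
have IH1' : derive (t' :: (s' ++ C)) = _ := IH1.
clear IH IH1.
rewrite !cat_cons derive_MM IH1' derive_MM allpairs_cat allpairs_cons.
case: (pairt t') => [d|] //=; by rewrite IH2 allpairs_cons.
Qed.

Lemma tw_cons t D : tiles_word (t :: D) = tword t ++ tiles_word D.
Proof. by []. Qed.

Lemma tw_cat A B : tiles_word (A ++ B) = tiles_word A ++ tiles_word B.
Proof. by rewrite /tiles_word map_cat flatten_cat. Qed.

Lemma all_map_imp (T U : Type) (P : pred T) (Q : pred U) (f : T -> U) X :
  all P X -> (forall D, P D -> Q (f D)) -> all Q (map f X).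
Proof. move=> H H'; elim: X H => //= x X IH /andP[Hx HX]; by rewrite H' // IH. Qed.

Lemma derive_size R :
  all (fun D => size (tiles_word D) == size (tiles_word R)) (derive R).
Proof.
elim/size_ind: R => // t s IH.
have IH1 := IH s (leqnn _).
have Hc : forall t, all (fun D => size (tiles_word D) == size (tiles_word (t :: s)))
                        (map (cons t) (derive s)).
  move=> t0; apply: (all_map_imp IH1) => D /eqP HD.
  by rewrite !tw_cons !size_cat HD.
case: t; try by rewrite derive_nM.
case: s IH IH1 Hc => [|t' s'] IH IH1 Hc; first by [].
rewrite derive_MM all_cat Hc /=.
have IH2 := IH s' (leqnSn _).
case: t' IH IH1 Hc => IH IH1 Hc //=; apply: (all_map_imp IH2) => D /eqP HD;
  by rewrite !tw_cons !size_cat HD.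
Qed.

Section PsiLem.
Variables (F : comRingType) (lam : F).

Lemma qvec_eq (u v : qvec F) : u.1 = v.1 -> (forall w, u.2 w = v.2 w) -> u = v.
Proof.
case: u => a f; case: v => b g /= -> H; f_equal; exact: functional_extensionality.
Qed.

Lemma big_all_eq (T : Type) (P : pred T) (s : seq T) (f g : T -> F) :
  all P s -> (forall x, P x -> f x = g x) -> \sum_(x <- s) f x = \sum_(x <- s) g x.
Proof.
move=> H H'; elim: s H => [|x s IH] /=; first by rewrite !big_nil.
by case/andP=> Hx Hs; rewrite !big_cons H' // IH.
Qed.

Lemma eq_cat_split (w x y : seq bool) :
  (w == x ++ y) = (take (size x) w == x) && (drop (size x) w == y).
Proof.
apply/eqP/andP => [->|[/eqP H1 /eqP H2]]; first by rewrite take_size_cat // drop_size_cat.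
by rewrite -(cat_take_drop (size x) w) H1 H2.
Qed.

Lemma psi_cat A C :
  derive (A ++ C) = [seq a ++ c | a <- derive A, c <- derive C] ->
  psi lam (A ++ C) = tens (psi lam A) (psi lam C).
Proof.
move=> HD; apply: qvec_eq; first by rewrite /= tw_cat size_cat.
move=> w; rewrite /= HD big_allpairs_dep /=.
case: ifP => Hw.
  rewrite big_distrl /=; apply: (big_all_eq (derive_size A)) => a /eqP Ha.
  rewrite big_distrr /=; apply: (big_all_eq (derive_size C)) => c /eqP Hc.
  rewrite /ndim count_cat exprD tw_cat eq_cat_split Ha.
  by case: (_ == _); case: (_ == _); rewrite /= ?mulr0 ?mul0r ?mulr1 // mulrACA.
transitivity (\sum_(a <- derive A) (0:F)); last by rewrite big1.
apply: (big_all_eq (derive_size A)) => a /eqP Ha.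
transitivity (\sum_(c <- derive C) (0:F)); last by rewrite big1.
apply: (big_all_eq (derive_size C)) => c /eqP Hc.
have -> : (w == tiles_word (a ++ c)) = false.
  apply/eqP => Heq; move: Hw; by rewrite Heq tw_cat size_cat Ha Hc eqxx.
by rewrite mulr0.
Qed.

Definition wf (u : qvec F) := forall w, size w != u.1 -> u.2 w = 0.

Lemma psi_wf R : wf (psi lam R).
Proof.
move=> w /= Hw.
transitivity (\sum_(D <- derive R) (0:F)); last by rewrite big1.
apply: (big_all_eq (derive_size R)) => D /eqP HD.
have -> : (w == tiles_word D) = false.
  by apply/eqP => Heq; move: Hw; rewrite Heq HD eqxx.
by rewrite mulr0.
Qed.

Lemma tens_assoc (u v x : qvec F) : tens (tens u v) x = tens u (tens v x).
Proof.
apply: qvec_eq => [|w]; first by rewrite /= addrA.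
rewrite /= !natrDE -addnA; case: ifP => // /eqP Hw.
rewrite size_take size_drop Hw.
rewrite (_ : (if _ then _ else _) = (u.1 + v.1)%N); last first.
  by case: ltnP => // H; apply/eqP; rewrite eqn_leq H addnA leq_addr.
rewrite eqxx (_ : (u.1 + (v.1 + x.1) - u.1 == v.1 + x.1)%N) ?addKn ?eqxx //.
rewrite take_takel ?leq_addr // [(u.1 + v.1)%N]addnC -take_drop drop_drop.
by rewrite mulrA.
Qed.

Lemma tens_unitl (u : qvec F) : wf u -> tens (ket F [::]) u = u.
Proof.
move=> Hu; apply: qvec_eq => // w /=; rewrite take0 drop0 mul1r.
by case: ifP => // /negbT /Hu ->.
Qed.

Lemma tens_scalel c (u v : qvec F) : tens (scale c u) v = scale c (tens u v).
Proof.
apply: qvec_eq => // w /=; case: ifP => _; by rewrite ?mulr0 // mulrA.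
Qed.

Lemma tens_scaler c (u v : qvec F) : tens u (scale c v) = scale c (tens u v).
Proof.
apply: qvec_eq => // w /=; case: ifP => _; by rewrite ?mulr0 // mulrCA.
Qed.

Lemma psi_Void : psi lam [:: Void] = ket F [:: false].
Proof. apply: qvec_eq => // w; by rewrite /= big_cons big_nil expr0 mul1r addr0. Qed.

Lemma psi_LDimer : psi lam [:: LDimer] = scale lam (ket F [:: true; true; false; false; false]).
Proof. apply: qvec_eq => // w; by rewrite /= big_cons big_nil expr1 addr0. Qed.

Lemma psi_RDimer : psi lam [:: RDimer] = scale lam (ket F [:: false; true; true]).
Proof. apply: qvec_eq => // w; by rewrite /= big_cons big_nil expr1 addr0. Qed.

Lemma psi_sep t X : t <> Mono -> psi lam (t :: X) = tens (psi lam [:: t]) (psi lam X).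
Proof.
move=> Ht; rewrite -cat1s psi_cat // derive_nM //=.
by case: t Ht => //= _; rewrite cats0.
Qed.

Lemma psi_sepR A t : sept t -> psi lam (A ++ [:: t]) = tens (psi lam A) (psi lam [:: t]).
Proof. by move=> Ht; rewrite psi_cat // derive_cat. Qed.

Lemma psi_sepV A X : psi lam (A ++ Void :: X) = tens (psi lam A) (tens (ket F [:: false]) (psi lam X)).
Proof. by rewrite psi_cat ?derive_cat // psi_sep // psi_Void. Qed.

Fixpoint flatL (Ls : seq nat) : seq tile :=
  if Ls is L :: Ls' then nseq L Mono ++ Void :: flatL Ls' else [::].

Lemma psi_chain Ls Z : psi lam (flatL Ls ++ Z) = tens (chain lam Ls) (psi lam Z).
Proof.
elim: Ls => [|L Ls IH] /=; first by rewrite tens_unitl //; apply: psi_wf.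
by rewrite -catA cat_cons psi_sepV IH !tens_assoc.
Qed.

End PsiLem.

Definition vm t := is_void t || is_mono t.

Lemma nov m : all vm m -> count is_void m = 0%N -> m = nseq (size m) Mono.
Proof. elim: m => //= t m IH /andP[]; case: t => //= _ Hm H; by rewrite -IH. Qed.

Lemma decomp m : all vm m -> (0 < count is_void m)%N ->
  exists L0 Ls LK, m = nseq L0 Mono ++ Void :: (flatL Ls ++ nseq LK Mono) /\
                   size Ls = (count is_void m).-1.
Proof.
elim: m => //= t m IH /andP[]; case: t => //= _ Hm.
  case E: (count is_void m) => [|c] _.
    by exists 0%N, [::], (size m); rewrite /= -nov.
  have [L0 [Ls [LK [Hme Hs]]]] := IH Hm ltac:(by rewrite E).
  exists 0%N, (L0 :: Ls), LK; split => /=; last by rewrite Hs E.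
  by rewrite Hme -catA cat_cons.
rewrite add0n => Hc.
have [L0 [Ls [LK [Hme Hs]]]] := IH Hm Hc.
by exists L0.+1, Ls, LK; split; [rewrite Hme | rewrite Hs].
Qed.

Lemma vo_cat p A B : void_offs p (A ++ B) =
  void_offs p A ++ void_offs (p + size (tiles_word A))%N B.
Proof.
elim: A p => [|t A IH] p /=; first by rewrite addn0.
by rewrite IH -catA tw_cons size_cat ?natrDE addnA.
Qed.

Lemma vo_nov p A : count is_void A = 0%N -> void_offs p A = [::].
Proof. elim: A p => //= t A IH p; case: t => //= H; by rewrite IH. Qed.

Lemma size_vo p A : size (void_offs p A) = count is_void A.
Proof. elim: A p => //= t A IH p; case: t => /=; by rewrite IH. Qed.

Lemma size_twM L : size (tiles_word (nseq L Mono)) = (3 * L)%N.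
Proof. elim: L => // L IH; rewrite (tw_cons Mono (nseq L Mono)) size_cat IH /=; lia. Qed.

Lemma count_nM L : count is_void (nseq L Mono) = 0%N.
Proof. by elim: L. Qed.

Lemma vo_flat q Ls Z : count is_void Z = 0%N ->
  void_offs q (flatL Ls ++ Z) =
  [seq (q + k + 3 * sumn (take k.+1 Ls))%N | k <- iota 0 (size Ls)].
Proof.
move=> HZ; elim: Ls q => [|L Ls IH] q /=; first exact: vo_nov.
rewrite -catA vo_cat vo_nov ?count_nM //= ?natrDE IH size_twM (iotaDl 1 0) -map_comp.
congr (_ :: _); first by rewrite take0 /=; lia.
apply/eq_in_map => k _ /=; rewrite add1n /=; lia.
Qed.

Lemma last_vm x W : vm x -> all vm W -> vm (last x W).
Proof. elim: W x => //= y W IH x _ /andP[Hy HW]; exact: IH. Qed.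

Theorem theorem2p10 (F : comRingType) (lam : F) (n : nat) (R : seq tile) :
  root_tiling n R ->
  (0 < size (void_offsets R))%N ->
  exists (Ls : seq nat) (L0 LK : nat) (psil psir : qvec F),
    size Ls = (size (void_offsets R)).-1 /\
    psil = (if is_ldimer (head Void R)
            then scale lam (tens (ket F [:: true; true; false; false; false])
                                 (varphi lam L0))
            else varphi lam L0) /\
    match last Void R with
    | RDimer => psir = scale lam (tens (varphi lam LK) (ket F [:: false; true; true]))
    | RMono1 => (0 < LK)%N /\ psir = varphiR lam 1 LK
    | RMono2 => (0 < LK)%N /\ psir = varphiR lam 2 LK
    | _ => psir = varphi lam LK
    end /\
    void_offsets R =
      [seq (psil.1 + k + 3 * sumn (take k Ls))%N | k <- iota 0 (size (void_offsets R))] /\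
    psi lam R = tens psil (tens (ket F [:: false]) (tens (chain lam Ls) psir)).
Proof.
case=> _ [l [m [r [HR [Hl [Hm Hr]]]]]] Hpos.
have Hcl : count is_void l = 0%N by case: Hl => ->.
have Hcr : count is_void r = 0%N by case: Hr => [->|[->|[->|->]]].
have Hcnt : size (void_offsets R) = count is_void m.
  by rewrite /void_offsets size_vo HR !count_cat Hcl Hcr addn0.
have [L0 [Ls [LK [Hme Hs]]]] := decomp Hm ltac:(by rewrite -Hcnt).
have HW : all vm (flatL Ls ++ nseq LK Mono).
  by move: Hm; rewrite Hme all_cat /= => /andP[_ ->].
set Z := nseq LK Mono ++ r.
have HR2 : R = (l ++ nseq L0 Mono) ++ Void :: (flatL Ls ++ Z).
  by rewrite HR Hme /Z -!catA /= -!catA.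
have HZc : count is_void Z = 0%N by rewrite /Z count_cat count_nM Hcr.
set PSIL := (if is_ldimer (head Void R)
            then scale lam (tens (ket F [:: true; true; false; false; false])
                                 (varphi lam L0))
            else varphi lam L0).
have Hpsil : psi lam (l ++ nseq L0 Mono) = PSIL.
  rewrite /PSIL HR2; case: Hl => -> /=; first by case: (L0).
  by rewrite psi_sep // psi_LDimer tens_scalel.
have Hpsi : psi lam R = tens PSIL (tens (ket F [:: false]) (tens (chain lam Ls) (psi lam Z))).
  by rewrite HR2 psi_sepV psi_chain Hpsil.
have Hvo0 : void_offsets R =
   [seq (PSIL.1 + k + 3 * sumn (take k Ls))%N | k <- iota 0 (size Ls).+1].
  rewrite -Hpsil HR2 /void_offsets vo_cat vo_nov; last by rewrite count_cat Hcl count_nM.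
  rewrite /= ?natrDE vo_flat // (iotaDl 1 0) -map_comp.
  congr (_ :: _); first by rewrite take0 /=; lia.
  apply/eq_in_map => k _ /=; rewrite add1n /=; lia.
have Hvo : void_offsets R =
   [seq (PSIL.1 + k + 3 * sumn (take k Ls))%N | k <- iota 0 (size (void_offsets R))].
  by rewrite {2}Hvo0 size_map size_iota.
have Hsz : size Ls = (size (void_offsets R)).-1 by rewrite Hcnt Hs.
exists Ls, L0.
case: Hr => [Er|[Er|[Er|Er]]]; rewrite /Z Er in HR2 Hpsi; rewrite Er in HR.
- exists LK, PSIL, (varphi lam LK).
  split; [exact: Hsz | split; [done | split; [ | split; [exact: Hvo | by rewrite Hpsi cats0]]]].
  have : vm (last Void R) by rewrite HR2 last_cat /= cats0; apply: last_vm.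
  by case: (last Void R).
- exists LK, PSIL, (scale lam (tens (varphi lam LK) (ket F [:: false; true; true]))).
  split; [exact: Hsz | split; [done | split; [ | split; [exact: Hvo | ]]]].
    by rewrite HR catA last_cat.
  by rewrite Hpsi psi_sepR // psi_RDimer tens_scaler.
- exists LK.+1, PSIL, (varphiR lam 1 LK.+1).
  split; [exact: Hsz | split; [done | split; [ | split; [exact: Hvo | ]]]].
    by rewrite HR catA last_cat.
  by rewrite Hpsi /varphiR /= cats1.
- exists LK.+1, PSIL, (varphiR lam 2 LK.+1).
  split; [exact: Hsz | split; [done | split; [ | split; [exact: Hvo | ]]]].
    by rewrite HR catA last_cat.
  by rewrite Hpsi /varphiR /= cats1.
Qed.
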